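(* For any finite point set $P\subset\mathbb{R}^1$ containing the source $s$ and any $1/2<\delta<1$, $$\mathrm{cost}_2(\rho_{\mathrm{sb}}(P))\le c_\delta\cdot\mathrm{OPT},\qquad c_\delta:=\max\Big(1+\delta+\frac{(1+5\delta)(1-\delta)^2}{\delta^2},\ \frac1{\delta^2}+\frac12\Big),$$ where $\mathrm{OPT}=\mathrm{cost}_2(\rho_{\mathrm{opt}}(P))$ is the cost of an optimal range assignment on $P$.
   Context: A range assignment $\rho$ on $P$ induces a directed graph with edge $(p,q)$ iff $|pq|\le\rho(p)$; it is feasible if the graph contains an arborescence rooted at $s$ spanning $P$; $\mathrm{cost}_2(\rho(P))=\sum_{p\in P}\rho(p)^2$; an optimal assignment is a feasible one of minimum cost. Points of $P$ left of $s$ are $\ell_1,\ell_2,\dots$ and right of $s$ are $r_1,r_2,\dots$, numbered by increasing distance from $s$. The successor $\mathrm{suc}(p)$ of $r_i$ is $r_{i+1}$ and of $\ell_i$ is $\ell_{i+1}$; $s$ has successors $r_1,\ell_1$; extreme (farthest) points have none ($\mathrm{nil}$). The standard range $\rho_{\mathrm{st}}(p)$ of $p\ne s$ is $|p\,\mathrm{suc}(p)|$, or $0$ if extreme. A point $p\ne s$ is expensive if $\mathrm{suc}(p)\ne\mathrm{nil}$ and $|p\,\mathrm{suc}(p)|>\delta|s\,\mathrm{suc}(p)|$, cheap otherwise; $s$ is always expensive. $d_{\max}=\max\{|s\,\mathrm{suc}(p)|:p\text{ expensive}\}$ (for $p=s$ both successors considered). The source-based assignment: $\rho_{\mathrm{sb}}(s)=d_{\max}$,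 $\rho_{\mathrm{sb}}(p)=0$ for expensive $p\ne s$, $\rho_{\mathrm{sb}}(p)=\rho_{\mathrm{st}}(p)$ for cheap $p$. *)

(* Defs.v *)
From HB Require Import structures.
From mathcomp Require Import all_boot all_order all_algebra.
From mathcomp Require Import reals.
Set Implicit Arguments. Unset Strict Implicit. Unset Printing Implicit Defensive.
Import Order.TTheory GRing.Theory Num.Theory.
Local Open Scope ring_scope.

Section RangeAssignment.
Variable R : realType.

Definition dist (p q : R) : R := `|p - q|.

Definition range_assignment (P : seq R) (rho : R -> R) : Prop :=
  forall p, p \in P -> 0 <= rho p.

Definition induced_edge (rho : R -> R) (p q : R) : Prop := dist p q <= rho p.

(* The induced graph contains an arborescence rooted at s spanning P:
   a parent map par on P\{s} whose edges (par p, p) are edges of the induced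
   graph, and following parents from any point of P reaches the root s. *)
Definition feasible (P : seq R) (s : R) (rho : R -> R) : Prop :=
  range_assignment P rho /\
  exists par : R -> R,
    (forall p, p \in P -> p != s -> par p \in P /\ induced_edge rho (par p) p) /\
    (forall p, p \in P -> exists n, iter n par p = s).

Definition cost2 (P : seq R) (rho : R -> R) : R := \sum_(p <- P) rho p ^+ 2.

Definition optimal (P : seq R) (s : R) (rho : R -> R) : Prop :=
  feasible P s rho /\ forall rho', feasible P s rho' -> cost2 P rho <= cost2 P rho'.

Definition sucR (P : seq R) (p : R) : option R :=
  if [seq x <- P | p < x] is x0 :: _ then
    Some (\big[Num.min/x0]_(x <- [seq x <- P | p < x]) x) else None.
Definition sucL (P : seq R) (p : R) : option R :=
  if [seq x <- P | x < p] is x0 :: _ then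
    Some (\big[Num.max/x0]_(x <- [seq x <- P | x < p]) x) else None.

(* successor of p <> s: r_i -> r_{i+1}, l_i -> l_{i+1}; None = nil (extreme) *)
Definition suc (P : seq R) (s p : R) : option R :=
  if s < p then sucR P p else sucL P p.

(* all successors of p (for s: r_1 and l_1, when they exist) *)
Definition sucs (P : seq R) (s p : R) : seq R :=
  if p == s then (if sucR P s is Some q then [:: q] else [::]) ++
                 (if sucL P s is Some q then [:: q] else [::])
  else (if suc P s p is Some q then [:: q] else [::]).

Definition rho_st (P : seq R) (s : R) (p : R) : R :=
  if suc P s p is Some q then dist p q else 0.

Definition expensive (P : seq R) (s delta : R) (p : R) : bool :=
  (p == s) ||
  (if suc P s p is Some q then delta * dist s q < dist p q else false).

Definition dmax (P : seq R) (s delta : R) : R :=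
  \big[Num.max/0]_(p <- P | expensive P s delta p)
     \big[Num.max/0]_(q <- sucs P s p) dist s q.

Definition rho_sb (P : seq R) (s delta : R) (p : R) : R :=
  if p == s then dmax P s delta
  else if expensive P s delta p then 0 else rho_st P s p.

Definition c_delta (delta : R) : R :=
  Num.max (1 + delta + (1 + 5 * delta) * (1 - delta) ^+ 2 / delta ^+ 2)
          (1 / delta ^+ 2 + 1 / 2).

End RangeAssignment.

(* Main.v *)
Require Import Defs.
From HB Require Import structures.
From mathcomp Require Import all_boot all_order all_algebra.
From mathcomp Require Import reals.
From mathcomp Require Import ring lra.
Import Order.TTheory GRing.Theory Num.Theory.
Set Implicit Arguments. Unset Strict Implicit. Unset Printing Implicit Defensive.
Local Open Scope ring_scope.

Section Alg.
Variable R : realType.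
Implicit Types d a D r P : R.

Definition Ac d : R := 1 + d + (1 + 5 * d) * (1 - d) ^+ 2 / d ^+ 2.

Lemma Ac_ge d : 1/2 < d -> d < 1 -> 1 + d + d * (1 - d) ^+ 2 <= Ac d.
Proof.
move=> h1 h2; rewrite /Ac lerD2l.
have d0 : 0 < d by lra.
rewrite ler_pdivlMr; last by rewrite exprn_gt0.
have h : 0 <= (1 - d) ^+ 2 by rewrite sqr_ge0.
have : d * d ^+ 2 <= 1 + 5 * d by nra.
nra.
Qed.

Lemma alg_ii d a D r :
  1/2 < d -> d < 1 -> 0 <= a -> a <= (1 - d) * D -> D <= a + r ->
  D ^+ 2 + d * (1 - d) * D * ((1 - d) * D - a) + d * (a + r) * (a + r - D)
   + d * (r - a) ^+ 2 <= Ac d * r ^+ 2.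
Proof.
move=> h1 h2 ha haD hD.
have d0 : d != 0 by apply/eqP; lra.
have d1 : 1 - d != 0 by apply/eqP; lra.
pose l1 := a + r - D; pose l2 := ((1 - d) * D - a) / (1 - d); pose l3 := d * a / (1 - d).
have E : Ac d * r ^+ 2 - (D ^+ 2 + d * (1 - d) * D * ((1 - d) * D - a) + d * (a + r) * (a + r - D)
   + d * (r - a) ^+ 2) =
  (Ac d - 2 * d) * l1 * l1 + (1 - d) ^+ 2 * (1 + 5 * d - d ^+ 3) / d ^+ 2 * l2 * l2
  + 2 * (1 - d) ^+ 2 / d * l3 * l3 + (2 * Ac d - 3 * d) * l1 * l2
  + (2 * Ac d + 1 - 4 * d) * l1 * l3 + (1 - d) ^+ 2 * (2 + 8 * d - d ^+ 2) / d ^+ 2 * l2 * l3.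
  by rewrite /l1 /l2 /l3 /Ac; field; rewrite d0 d1.
rewrite -subr_ge0 E.
have hA := Ac_ge h1 h2.
have dp : 0 < d by lra.
have d1p : 0 < 1 - d by lra.
have l1p : 0 <= l1 by rewrite /l1; lra.
have l2p : 0 <= l2 by rewrite /l2 divr_ge0 //; lra.
have l3p : 0 <= l3 by rewrite /l3 divr_ge0 //; nra.
have q2 : 0 <= (1 - d) ^+ 2 by rewrite sqr_ge0.
have c11 : 0 <= Ac d - 2 * d by nra.
have c22 : 0 <= (1 - d) ^+ 2 * (1 + 5 * d - d ^+ 3) / d ^+ 2.
  apply: divr_ge0; last by rewrite sqr_ge0. apply: mulr_ge0 => //. nra.
have c33 : 0 <= 2 * (1 - d) ^+ 2 / d by apply: divr_ge0; lra.
have c12 : 0 <= 2 * Ac d - 3 * d by nra.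
have c13 : 0 <= 2 * Ac d + 1 - 4 * d by nra.
have c23 : 0 <= (1 - d) ^+ 2 * (2 + 8 * d - d ^+ 2) / d ^+ 2.
  apply: divr_ge0; last by rewrite sqr_ge0. apply: mulr_ge0 => //. nra.
repeat apply: addr_ge0; repeat apply: mulr_ge0 => //.
Qed.

Lemma alg_i d a D r P :
  1/2 < d -> d < 1 -> 0 <= a -> 0 <= D -> D <= r - a -> 0 <= P -> P <= (1 - d) * D ->
  D ^+ 2 + d * P * P + d * (r - a) * (r - a - D) + d * (a + r) * r <= Ac d * r ^+ 2.
Proof.
move=> h1 h2 ha hD hDr hP hPD.
have hA := Ac_ge h1 h2.
have dp : 0 < d by lra.
have q0 : 0 <= d * (1 - d) ^+ 2 by apply: mulr_ge0; [lra| rewrite sqr_ge0].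
set K := 1 + d * (1 - d) ^+ 2.
have s1 : d * P * P <= d * (1 - d) ^+ 2 * D ^+ 2.
  have : P * P <= (1 - d) ^+ 2 * D ^+ 2 by nra.
  nra.
set u := r - a.
have s2 : K * D ^+ 2 + d * u * (u - D) <= K * u ^+ 2.
  have Kd : d <= K by rewrite /K; lra.
  have : 0 <= (u - D) * ((K - d) * u + K * D).
    apply: mulr_ge0; first by rewrite /u; lra.
    apply: addr_ge0; apply: mulr_ge0; rewrite /u; lra.
  move=> h; rewrite -subr_ge0; apply: le_trans h _; rewrite le_eqVlt; apply/orP; left; apply/eqP; ring.
have s3 : K * u ^+ 2 + d * (a + r) * r <= (K + d) * r ^+ 2.
  have K1 : 1 <= K by rewrite /K; lra.
  have ar : a <= r by lra.
  have h1' : 0 <= K * (r - a) by apply: mulr_ge0; lra.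
  have h2' : 0 <= (K - d) * r by apply: mulr_ge0; lra.
  have : 0 <= a * (2 * K * r - K * a - d * r) by apply: mulr_ge0; lra.
  rewrite /u => h; rewrite -subr_ge0; apply: le_trans h _; rewrite le_eqVlt; apply/orP; left; apply/eqP; ring.
have : (K + d) * r ^+ 2 <= Ac d * r ^+ 2.
  apply: ler_wpM2r; first by rewrite sqr_ge0. rewrite /K; lra.
move: s1 s2 s3; rewrite /K /u; nra.
Qed.
End Alg.
Section Intv.
Variable R : realType.

Lemma ler_sum_seq (I : eqType) (r : seq I) (F G : I -> R) :
  (forall i, i \in r -> F i <= G i) -> \sum_(i <- r) F i <= \sum_(i <- r) G i.
Proof. by move=> h; rewrite big_seq [X in _ <= X]big_seq; apply: ler_sum. Qed.

Lemma interval_sum (xs : seq R) (lo hi : R -> R) (a b : R) :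
  uniq xs -> a <= b ->
  (forall x, x \in xs -> [/\ a <= lo x, lo x <= hi x & hi x <= b]) ->
  (forall x y, x \in xs -> y \in xs -> x != y -> (hi x <= lo y) \/ (hi y <= lo x)) ->
  \sum_(x <- xs) (hi x - lo x) <= b - a.
Proof.
move: {2}(size xs) (leqnn (size xs)) => n.
elim: n xs a b => [|n IH] xs a b.
  by case: xs => // _ _ ab _ _; rewrite big_nil; lra.
case: xs => [|x0 xs] /=; first by move=> _ _ ab _ _; rewrite big_nil; lra.
rewrite ltnS => hs /andP[x0n un] ab hin hdj.
rewrite big_cons (bigID (fun y => hi y <= lo x0)) /=.
have [a0 l0 h0] := hin x0 (mem_head _ _).
have inx y : y \in xs -> y \in x0 :: xs by rewrite inE => ->; rewrite orbT.
have L := IH [seq y <- xs | hi y <= lo x0] a (lo x0).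
have Rr := IH [seq y <- xs | ~~ (hi y <= lo x0)] (hi x0) b.
have sl : forall (p : pred R), (size [seq y <- xs | p y] <= n)%N.
  by move=> p; rewrite size_filter; apply: leq_trans hs; apply: count_size.
have lx : forall (p : pred R) y, y \in [seq y <- xs | p y] -> y \in xs /\ p y.
  by move=> p y; rewrite mem_filter => /andP[].
have S1 : \sum_(y <- [seq y <- xs | hi y <= lo x0]) (hi y - lo y) <= lo x0 - a.
  apply: L => //; first by apply: filter_uniq.
  - by move=> y /lx [yi hy]; have [a1 l1 h1] := hin y (inx _ yi); split.
  - by move=> y z /lx[/inx yi _] /lx[/inx zi _]; apply: hdj.
have S2 : \sum_(y <- [seq y <- xs | ~~ (hi y <= lo x0)]) (hi y - lo y) <= b - hi x0.
  apply: Rr => //; first by apply: filter_uniq.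
  - move=> y /lx [yi hy]; have [a1 l1 h1] := hin y (inx _ yi); split => //.
    have yx : x0 != y by apply: contraNneq x0n => ->.
    by case: (hdj x0 y (mem_head _ _) (inx _ yi) yx) => // h; rewrite h in hy.
  - by move=> y z /lx[/inx yi _] /lx[/inx zi _]; apply: hdj.
rewrite big_filter in S1; rewrite big_filter in S2.
lra.
Qed.

Lemma sq_sum (xs : seq R) (lo hi : R -> R) (a b m : R) :
  uniq xs -> 0 <= m ->
  (forall x, x \in xs -> [/\ a <= lo x, lo x <= hi x, hi x <= b & hi x - lo x <= m]) ->
  (forall x y, x \in xs -> y \in xs -> x != y -> (hi x <= lo y) \/ (hi y <= lo x)) ->
  \sum_(x <- xs) (hi x - lo x) ^+ 2 <= m * Num.max 0 (b - a).
Proof.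
move=> un m0 hin hdj.
case: xs un hin hdj => [|x0 xs] un hin hdj.
  by rewrite big_nil; apply: mulr_ge0 => //; rewrite le_max lexx.
have [a0 l0 h0 _] := hin x0 (mem_head _ _).
have ab : a <= b by lra.
rewrite max_r; last by lra.
apply: (@le_trans _ _ (\sum_(x <- x0 :: xs) m * (hi x - lo x))).
  apply: ler_sum_seq => x xi; have [_ l1 _ m1] := hin x xi.
  rewrite expr2; apply: ler_wpM2r; lra.
rewrite -mulr_sumr; apply: ler_wpM2l => //.
apply: interval_sum => //.
  by move=> x /hin [].
Qed.
End Intv.

Section Abs.
Variable R : realType.

Lemma sum_split (xs : seq R) (q : pred R) (F : R -> R) :
  \sum_(x <- xs) F x = \sum_(x <- [seq x <- xs | q x]) F x + \sum_(x <- [seq x <- xs | ~~ q x]) F x.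
Proof. by rewrite (bigID q) !big_filter. Qed.

Lemma mem_filt (xs : seq R) (q : pred R) x : x \in [seq y <- xs | q y] -> x \in xs /\ q x.
Proof. by rewrite mem_filter => /andP[]. Qed.

Variables (d r a : R) (sx : bool) (sd : R -> bool) (inn out : R -> R) (xs : seq R).
Hypotheses (un : uniq xs) (a0 : 0 <= a) (r0 : 0 <= r) (d0 : 0 < d) (d1 : d < 1)
  (Hg : forall p, p \in xs -> [/\ 0 <= inn p, inn p <= out p & out p - inn p <= d * out p])
  (Hd : forall p q, p \in xs -> q \in xs -> p != q -> sd p = sd q -> out p <= inn q \/ out q <= inn p)
  (Hr : forall p, p \in xs -> if sd p == sx then a <= inn p /\ out p <= a + r else out p <= r - a).

Let G := fun p => (out p - inn p) ^+ 2.

Lemma sub_sq (l : seq R) (lo hi m : R) : uniq l -> 0 <= m -> {subset l <= xs} ->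
  (forall p q, p \in l -> q \in l -> sd p = sd q) ->
  (forall p, p \in l -> [/\ lo <= inn p, out p <= hi & out p - inn p <= m]) ->
  \sum_(p <- l) G p <= m * Num.max 0 (hi - lo).
Proof.
move=> ul m0 sub same hb; apply: sq_sum => //.
  move=> p pl; have [h1 h2 h3] := hb p pl; have [g1 g2 g3] := Hg (sub _ pl); split => //.
move=> p q pl ql pq; apply: Hd => //; [exact: sub|exact: sub|exact: same].
Qed.

Lemma gen_bound : \sum_(p <- xs) G p <= (1 + d) * r ^+ 2.
Proof.
have a0' := a0; have r0' := r0; have d0' := d0; have d1' := d1.
rewrite (sum_split _ (fun p => sd p == sx)).
set l1 := [seq _ <- _ | _]; set l2 := [seq _ <- _ | _].
have B1 : \sum_(p <- l1) G p <= r * Num.max 0 (a + r - a).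
  apply: sub_sq => //; first by apply: filter_uniq.
  - by move=> p /mem_filt[].
  - by move=> p q /mem_filt[_ /eqP ->] /mem_filt[_ /eqP ->].
  - move=> p /mem_filt[pi /eqP e]; have := Hr pi; rewrite e eqxx => -[h1 h2].
    split => //; lra.
have B2 : \sum_(p <- l2) G p <= (d * r) * Num.max 0 (r - a - 0).
  apply: sub_sq => //; first by apply: filter_uniq.
  - by rewrite mulr_ge0 // ltW.
  - by move=> p /mem_filt[].
  - move=> p q /mem_filt[_ hp] /mem_filt[_ hq].
    by move: hp hq; case: (sd p); case: (sd q); case: sx.
  - move=> p /mem_filt[pi e]; have := Hr pi; rewrite (negbTE e) => h.
    have [g1 g2 g3] := Hg pi; split => //.
    have : d * out p <= d * r by apply: ler_wpM2l; lra.
    lra.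
have M1 : Num.max 0 (a + r - a) = r by rewrite max_r; lra.
have M2 : Num.max 0 (r - a - 0) <= r by rewrite ge_max; apply/andP; split; lra.
rewrite M1 in B1.
have : d * r * Num.max 0 (r - a - 0) <= d * r * r.
  by apply: ler_wpM2l => //; apply: mulr_ge0 => //; lra.
rewrite expr2; nra.
Qed.

Variables (sE : bool) (Pst D : R).
Hypotheses (d12 : 1 / 2 < d) (P0 : 0 <= Pst) (PD : Pst <= (1 - d) * D)
  (Hs : forall p, p \in xs -> sd p = sE -> out p <= Pst \/ D <= inn p)
  (HE : if sE == sx then a <= Pst /\ D <= a + r else D <= r - a).

Lemma star_bound : D ^+ 2 + \sum_(p <- xs) G p <= Ac d * r ^+ 2.
Proof.
have a0' := a0; have r0' := r0; have d0' := d0; have d1' := d1.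
have d12' := d12; have P0' := P0; have PD' := PD.
have D0 : 0 <= D by nra.
case: eqP HE => [eE [aP Dar] | nE Dra].
-
  have ar : a <= r by nra.
  rewrite (sum_split _ (fun p => sd p == sx)).
  rewrite (sum_split [seq _ <- _ | _] (fun p => out p <= Pst)).
  set l1 := [seq _ <- [seq _ <- _ | _] | _]; set l2 := [seq _ <- [seq _ <- _ | _] | _].
  set l3 := [seq _ <- xs | _].
  have B1 : \sum_(p <- l1) G p <= (d * Pst) * Num.max 0 (Pst - a).
    apply: sub_sq => //; first by do 2 apply: filter_uniq.
    - by nra.
    - by move=> p /mem_filt[/mem_filt[]].
    - by move=> p q /mem_filt[/mem_filt[_ /eqP ->] _] /mem_filt[/mem_filt[_ /eqP ->] _].
    - move=> p /mem_filt[/mem_filt[pi /eqP e] hP]; have := Hr pi; rewrite e eqxx => -[h1 h2].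
      have [g1 g2 g3] := Hg pi; split => //.
      have : d * out p <= d * Pst by apply: ler_wpM2l; lra.
      lra.
  have B2 : \sum_(p <- l2) G p <= (d * (a + r)) * Num.max 0 (a + r - D).
    apply: sub_sq => //; first by do 2 apply: filter_uniq.
    - by nra.
    - by move=> p /mem_filt[/mem_filt[]].
    - by move=> p q /mem_filt[/mem_filt[_ /eqP ->] _] /mem_filt[/mem_filt[_ /eqP ->] _].
    - move=> p /mem_filt[/mem_filt[pi /eqP e] hP]; have := Hr pi; rewrite e eqxx => -[h1 h2].
      have [g1 g2 g3] := Hg pi.
      have hD : D <= inn p.
        by case: (Hs pi (etrans e (esym eE))) => // h; rewrite h in hP.
      split => //.
      have : d * out p <= d * (a + r) by apply: ler_wpM2l; lra.
      lra.
  have B3 : \sum_(p <- l3) G p <= (d * (r - a)) * Num.max 0 (r - a - 0).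
    apply: sub_sq => //; first by apply: filter_uniq.
    - by nra.
    - by move=> p /mem_filt[].
    - move=> p q /mem_filt[_ hp] /mem_filt[_ hq].
      by move: hp hq; case: (sd p); case: (sd q); case: sx.
    - move=> p /mem_filt[pi e]; have := Hr pi; rewrite (negbTE e) => h.
      have [g1 g2 g3] := Hg pi; split => //.
      have : d * out p <= d * (r - a) by apply: ler_wpM2l; lra.
      lra.
  rewrite max_r in B1; last by lra.
  rewrite max_r in B2; last by lra.
  rewrite max_r in B3; last by lra.
  have PP : Pst * (Pst - a) <= (1 - d) * D * ((1 - d) * D - a).
    have : 0 <= ((1 - d) * D - Pst) * ((1 - d) * D + Pst - a) by apply: mulr_ge0; lra.
    move=> h; rewrite -subr_ge0; apply: le_trans h _; rewrite le_eqVlt; apply/orP; left; apply/eqP; ring.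
  have := alg_ii d12 d1 a0 (le_trans aP PD) Dar.
  have : d * (Pst * (Pst - a)) <= d * ((1 - d) * D * ((1 - d) * D - a)) by apply: ler_wpM2l; lra.
  move: B1 B2 B3; rewrite /Ac; rewrite !expr2; nra.
-
  rewrite (sum_split _ (fun p => sd p == sx)).
  rewrite [X in _ + (_ + X)](sum_split [seq _ <- _ | _] (fun p => out p <= Pst)).
  set l3 := [seq _ <- xs | _].
  set l1 := [seq _ <- [seq _ <- _ | _] | _]; set l2 := [seq _ <- [seq _ <- _ | _] | _].
  have sdE : forall p, sd p != sx -> sd p = sE.
    by move=> p; move: nE; case: (sd p); case: sE; case: sx.
  have B1 : \sum_(p <- l1) G p <= (d * Pst) * Num.max 0 (Pst - 0).
    apply: sub_sq => //; first by do 2 apply: filter_uniq.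
    - by apply: mulr_ge0 => //; lra.
    - by move=> p /mem_filt[/mem_filt[]].
    - by move=> p q /mem_filt[/mem_filt[_ /sdE ->] _] /mem_filt[/mem_filt[_ /sdE ->] _].
    - move=> p /mem_filt[/mem_filt[pi e] hP].
      have [g1 g2 g3] := Hg pi; split => //.
      have : d * out p <= d * Pst by apply: ler_wpM2l; lra.
      lra.
  have B2 : \sum_(p <- l2) G p <= (d * (r - a)) * Num.max 0 (r - a - D).
    apply: sub_sq => //; first by do 2 apply: filter_uniq.
    - by apply: mulr_ge0 => //; lra.
    - by move=> p /mem_filt[/mem_filt[]].
    - by move=> p q /mem_filt[/mem_filt[_ /sdE ->] _] /mem_filt[/mem_filt[_ /sdE ->] _].
    - move=> p /mem_filt[/mem_filt[pi e] hP]; have := Hr pi; rewrite (negbTE e) => h.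
      have [g1 g2 g3] := Hg pi.
      have hD : D <= inn p.
        by case: (Hs pi (sdE _ e)) => // h'; rewrite h' in hP.
      split => //.
      have : d * out p <= d * (r - a) by apply: ler_wpM2l; lra.
      lra.
  have B3 : \sum_(p <- l3) G p <= (d * (a + r)) * Num.max 0 (a + r - a).
    apply: sub_sq => //; first by apply: filter_uniq.
    - by apply: mulr_ge0 => //; lra.
    - by move=> p /mem_filt[].
    - by move=> p q /mem_filt[_ /eqP ->] /mem_filt[_ /eqP ->].
    - move=> p /mem_filt[pi /eqP e]; have := Hr pi; rewrite e eqxx => -[h1 h2].
      have [g1 g2 g3] := Hg pi; split => //.
      have : d * out p <= d * (a + r) by apply: ler_wpM2l; lra.
      lra.
  rewrite max_r in B1; last by lra.
  rewrite max_r in B2; last by lra.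
  rewrite max_r in B3; last by lra.
  have := alg_i d12 d1 a0 D0 Dra P0 PD.
  move: B1 B2 B3; rewrite !subr0; lra.
Qed.
End Abs.


Section Bridge.
Variable R : realType.

Lemma bigmin_mem (l : seq R) (x0 : R) : \big[Num.min/x0]_(x <- l) x \in x0 :: l.
Proof.
elim: l => [|y l IH]; first by rewrite big_nil mem_head.
rewrite big_cons {1}/Order.min; case: ifP => _; first by rewrite !inE eqxx orbT.
move: IH; rewrite !inE => /orP[->//|->]; by rewrite !orbT.
Qed.

Lemma bigmin_le (l : seq R) (x0 : R) y : y \in l -> \big[Num.min/x0]_(x <- l) x <= y.
Proof.
elim: l => [|z l IH] //; rewrite big_cons inE {1}/Order.min => /orP[/eqP->|yl]; case: ifP => h //.
- by rewrite leNgt h.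
- apply: le_trans (IH yl); exact: ltW.
- by apply: IH.
Qed.

Lemma bigmax_mem (l : seq R) (x0 : R) : \big[Num.max/x0]_(x <- l) x \in x0 :: l.
Proof.
elim: l => [|y l IH]; first by rewrite big_nil mem_head.
rewrite big_cons {1}/Order.max; case: ifP => _; last by rewrite !inE eqxx orbT.
move: IH; rewrite !inE => /orP[->//|->]; by rewrite !orbT.
Qed.

Lemma bigmax_ge (l : seq R) (x0 : R) y : y \in l -> y <= \big[Num.max/x0]_(x <- l) x.
Proof.
elim: l => [|z l IH] //; rewrite big_cons inE {1}/Order.max => /orP[/eqP->|yl]; case: ifP => h //.
- exact: ltW.
- by apply: IH.
- by apply: le_trans (IH yl) _; rewrite leNgt h.
Qed.

Lemma sucR_some (P : seq R) p q : sucR P p = Some q ->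
  [/\ q \in P, p < q & forall y, y \in P -> p < y -> q <= y].
Proof.
rewrite /sucR; case E: [seq x <- P | p < x] => [|x0 l] //= [<-].
have mf y : (y \in x0 :: l) = (y \in P) && (p < y) by rewrite -E mem_filter andbC.
have : \big[Num.min/x0]_(x <- x0 :: l) x \in x0 :: l.
  by have := bigmin_mem (x0 :: l) x0; rewrite inE => /orP[/eqP->|//]; apply: mem_head.
rewrite mf => /andP[qP pq]; split => //.
by move=> y yP py; apply: bigmin_le; rewrite mf yP.
Qed.

Lemma sucL_some (P : seq R) p q : sucL P p = Some q ->
  [/\ q \in P, q < p & forall y, y \in P -> y < p -> y <= q].
Proof.
rewrite /sucL; case E: [seq x <- P | x < p] => [|x0 l] //= [<-].
have mf y : (y \in x0 :: l) = (y \in P) && (y < p) by rewrite -E mem_filter andbC.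
have : \big[Num.max/x0]_(x <- x0 :: l) x \in x0 :: l.
  by have := bigmax_mem (x0 :: l) x0; rewrite inE => /orP[/eqP->|//]; apply: mem_head.
rewrite mf => /andP[qP pq]; split => //.
by move=> y yP py; apply: bigmax_ge; rewrite mf yP.
Qed.

Lemma cutR (P : seq R) s rho p q : feasible P s rho -> p \in P -> s <= p -> sucR P p = Some q ->
  exists2 x, x \in P & x <= p /\ q - x <= rho x.
Proof.
move=> [_ [par [Hpar Hit]]] pP sp /sucR_some [qP pq qmin].
have [n Hn] := Hit q qP.
suff : forall n y, y \in P -> q <= y -> iter n par y = s -> exists2 x, x \in P & x <= p /\ q - x <= rho x.
  by move=> H; apply: (H n q) => //.
elim=> [|k IH] y yP qy.
  move=> /= ys; have : s < y by apply: lt_le_trans qy; apply: le_lt_trans pq.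
  by rewrite ys ltxx.
rewrite iterSr => hit.
have ys : y != s.
  apply/eqP => ys; have : s < y by apply: lt_le_trans qy; apply: le_lt_trans pq.
  by rewrite ys ltxx.
have [pyP ed] := Hpar y yP ys.
case: (leP q (par y)) => hq; first by apply: (IH (par y)).
exists (par y) => //; split.
  by rewrite leNgt; apply/negP => h; have := qmin _ pyP h; rewrite leNgt hq.
move: ed; rewrite /induced_edge /dist => ed.
have : y - par y <= `|par y - y| by rewrite distrC ler_norm.
lra.
Qed.

Lemma cutL (P : seq R) s rho p q : feasible P s rho -> p \in P -> p <= s -> sucL P p = Some q ->
  exists2 x, x \in P & p <= x /\ x - q <= rho x.
Proof.
move=> [_ [par [Hpar Hit]]] pP sp /sucL_some [qP pq qmax].
have [n Hn] := Hit q qP.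
suff : forall n y, y \in P -> y <= q -> iter n par y = s -> exists2 x, x \in P & p <= x /\ x - q <= rho x.
  by move=> H; apply: (H n q) => //.
elim=> [|k IH] y yP qy.
  move=> /= ys; lra.
rewrite iterSr => hit.
have ys : y != s.
  apply/eqP => ys; lra.
have [pyP ed] := Hpar y yP ys.
case: (leP (par y) q) => hq; first by apply: (IH (par y)).
exists (par y) => //; split.
  by rewrite leNgt; apply/negP => h; have := qmax _ pyP h; rewrite leNgt hq.
move: ed; rewrite /induced_edge /dist => ed.
have : par y - y <= `|par y - y| by rewrite ler_norm.
lra.
Qed.


Lemma nlt (a b : R) : ~~ (a < b) -> b <= a.
Proof. by rewrite -leNgt. Qed.

Lemma nrm_lt (a b : R) : a < b -> `|a - b| = b - a /\ `|b - a| = b - a.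
Proof.
move=> h; have e : `|b - a| = b - a by rewrite ger0_norm // subr_ge0 ltW.
by split => //; rewrite distrC.
Qed.

Lemma bigmax_att (T : eqType) (l : seq T) (Q : pred T) (F : T -> R) :
  \big[Num.max/0]_(i <- l | Q i) F i = 0 \/
  exists i, [/\ i \in l, Q i & \big[Num.max/0]_(i <- l | Q i) F i = F i].
Proof.
elim: l => [|y l IH]; first by left; rewrite big_nil.
rewrite big_cons; case: ifP => Qy.
  rewrite {1 3}/Order.max; case: ifP => _.
    case: IH => [->|[i [il Qi e]]]; [by left | right; exists i; split => //].
    by rewrite inE il orbT.
  by right; exists y; rewrite mem_head.
case: IH => [->|[i [il Qi e]]]; [by left | right; exists i; split => //].
by rewrite inE il orbT.
Qed.

Section Main.
Variables (P : seq R) (s d : R) (rho : R -> R).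

Definition sucv p := odflt p (suc P s p).
Definition cg p := (p != s) && ~~ expensive P s d p && (suc P s p != None).
Definition inn p := if s < p then p - s else s - p.
Definition outv p := if s < p then sucv p - s else s - sucv p.
Definition sd p := s < p.
Definition covc p x := if s < p then (x <= p) && (sucv p - x <= rho x)
                       else (p <= x) && (x - sucv p <= rho x).
Definition cov p := nth s P (find (covc p) P).

Lemma inn_ge0 p : 0 <= inn p.
Proof. rewrite /inn; case: ifP => h; [lra | move/negbT/nlt: h; lra]. Qed.

Lemma cg_spec p : cg p -> [/\ p != s, ~~ expensive P s d p &
  (s < p /\ sucR P p = Some (sucv p)) \/ (p < s /\ sucL P p = Some (sucv p))].
Proof.
rewrite /cg /sucv => /andP[/andP[ps ne] sn]; split => //.
move: sn; rewrite /suc; case: ifP => sp.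
  by case: (sucR P p) => // q _; left.
case: (sucL P p) => // q _; right; split => //.
by move/negbT/nlt: sp => h; rewrite lt_neqAle ps h.
Qed.

Lemma cg_geo p : cg p -> [/\ 0 <= inn p, inn p <= outv p, outv p - inn p <= d * outv p
  & rho_sb P s d p = outv p - inn p].
Proof.
move=> /cg_spec [ps ne [[sp E]|[sp E]]].
- have [_ pq _] := sucR_some E.
  have [n1 n2] := nrm_lt pq; have [n3 n4] := nrm_lt (lt_trans sp pq).
  move: ne; rewrite /expensive (negbTE ps) /= /suc sp E /dist n1 n3 -leNgt => ne.
  rewrite /rho_sb (negbTE ps) /expensive (negbTE ps) /suc sp E /= /dist n1 n3.
  rewrite ltNge ne /= /rho_st /suc sp E /dist n1 /inn /outv sp; split; lra.
- have [_ pq _] := sucL_some E.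
  have [n1 n2] := nrm_lt pq; have [n3 n4] := nrm_lt (lt_trans pq sp).
  have nsp : ~~ (s < p) by rewrite -leNgt ltW.
  move: ne; rewrite /expensive (negbTE ps) /= /suc (negbTE nsp) E /dist n2 n4 -leNgt => ne.
  rewrite /rho_sb (negbTE ps) /expensive (negbTE ps) /suc (negbTE nsp) E /= /dist n2 n4.
  rewrite ltNge ne /= /rho_st /suc (negbTE nsp) E /dist n2 /inn /outv (negbTE nsp); split; lra.
Qed.

Lemma cg_disj p p' : cg p -> cg p' -> p \in P -> p' \in P -> p != p' -> sd p = sd p' ->
  outv p <= inn p' \/ outv p' <= inn p.
Proof.
move=> c c' pP pP' pp' e.
have [ps _ [[sp E]|[sp E]]] := cg_spec c; have [ps' _ [[sp' E']|[sp' E']]] := cg_spec c';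
  rewrite /sd in e.
- rewrite /outv /inn sp sp'.
  have [_ _ m] := sucR_some E; have [_ _ m'] := sucR_some E'.
  case: (ltgtP p p') => h.
  + by left; have := m _ pP' h; lra.
  + by right; have := m' _ pP h; lra.
  + by rewrite h eqxx in pp'.
- have ns : ~~ (s < p') by rewrite -leNgt ltW.
  by move: e; rewrite sp (negbTE ns).
- have ns : ~~ (s < p) by rewrite -leNgt ltW.
  by move: e; rewrite sp' (negbTE ns).
- have ns : ~~ (s < p) by rewrite -leNgt ltW.
  have ns' : ~~ (s < p') by rewrite -leNgt ltW.
  rewrite /outv /inn (negbTE ns) (negbTE ns').
  have [_ _ m] := sucL_some E; have [_ _ m'] := sucL_some E'.
  case: (ltgtP p p') => h.
  + by right; have := m' _ pP h; lra.
  + by left; have := m _ pP' h; lra.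
  + by rewrite h eqxx in pp'.
Qed.

Lemma cov_spec p : feasible P s rho -> p \in P -> cg p -> cov p \in P /\ covc p (cov p).
Proof.
move=> hf pP c.
have hh : has (covc p) P.
  have [_ _ [[sp E]|[sp E]]] := cg_spec c.
  - have [x xP [h1 h2]] := cutR hf pP (ltW sp) E.
    by apply/hasP; exists x => //; rewrite /covc sp h1 h2.
  - have [x xP [h1 h2]] := cutL hf pP (ltW sp) E.
    have ns : ~~ (s < p) by rewrite -leNgt ltW.
    by apply/hasP; exists x => //; rewrite /covc (negbTE ns) h1 h2.
split; first by rewrite /cov mem_nth // -has_find.
exact: nth_find.
Qed.

Lemma cov_rel p x : cg p -> covc p x ->
  if sd p == (s < x) then inn x <= inn p /\ outv p <= inn x + rho x
  else outv p <= rho x - inn x.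
Proof.
move=> c; have [_ _ [[sp E]|[sp E]]] := cg_spec c.
- rewrite /covc /sd /inn /outv sp => /andP[h1 h2].
  case sx: (s < x) => /=.
    by split; lra.
  by move/negbT/nlt: sx => sx; lra.
- have ns : ~~ (s < p) by rewrite -leNgt ltW.
  rewrite /covc /sd /inn /outv (negbTE ns) => /andP[h1 h2].
  case sx: (s < x) => /=.
    by lra.
  by move/negbT/nlt: sx => sx; split; lra.
Qed.

Lemma cost_dec : s \in P -> uniq P ->
  cost2 P (rho_sb P s d) = dmax P s d ^+ 2 + \sum_(p <- P | cg p) (outv p - inn p) ^+ 2.
Proof.
move=> sP uP; rewrite /cost2 (bigD1_seq s) //= {1}/rho_sb eqxx; congr (_ + _).
rewrite big_mkcond [RHS]big_mkcond /=; apply: eq_bigr => p _.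
case ps: (p != s) => /=.
- case c: (cg p); first by have [_ _ _ ->] := cg_geo c.
  have pn : (p == s) = false by apply/negbTE; rewrite ps.
  move: c; rewrite /cg ps /= /rho_sb pn; case: (expensive P s d p) => //=.
    by rewrite expr0n.
  by rewrite /rho_st; case: (suc P s p) => //; rewrite expr0n.
- by rewrite /cg ps.
Qed.

Lemma star_geo p E : 0 < d -> d < 1 -> p \in P -> expensive P s d p -> E \in sucs P s p ->
  ((s <= p /\ sucR P p = Some E) \/ (p <= s /\ sucL P p = Some E)) /\
  inn p <= (1 - d) * `|s - E|.
Proof.
move=> d0 d1 pP ex; rewrite /sucs; case: eqP => [->|ps].
  have i0 : inn s = 0 by rewrite /inn ltxx subrr.
  have nn : 0 <= (1 - d) * `|s - E| by apply: mulr_ge0; [lra | apply: normr_ge0].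
  rewrite i0 => hE; split => //.
  case eR: (sucR P s) hE => [qr|]; case eL: (sucL P s) => [ql|] /=; rewrite ?inE //.
  - by case/orP => /eqP ->; [left | right].
  - by move=> /eqP ->; left.
  - by move=> /eqP ->; right.
have pn : (p == s) = false by apply/eqP.
move: ex; rewrite /expensive pn /= /suc.
case: ifP => sp.
- case e: (sucR P p) => [q|] //; rewrite inE => dd /eqP ->.
  have [_ pq _] := sucR_some e.
  have [n1 _] := nrm_lt pq; have [n3 _] := nrm_lt (lt_trans sp pq).
  move: dd; rewrite /dist n1 n3 /inn sp => dd.
  split; [left; split => //; exact: ltW | lra].
- have sp' : p < s by move/negbT/nlt: sp => h; rewrite lt_neqAle pn h.
  case e: (sucL P p) => [q|] //; rewrite inE => dd /eqP ->.
  have [_ pq _] := sucL_some e.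
  have [_ n2] := nrm_lt pq; have [_ n4] := nrm_lt (lt_trans pq sp').
  move: dd; rewrite /dist n2 n4 /inn sp => dd.
  split; [right; split => //; exact: ltW | lra].
Qed.


Lemma inn_R p : s <= p -> inn p = p - s.
Proof. by rewrite /inn; case: ifP => // /negbT/nlt h1 h2; lra. Qed.

Lemma inn_L p : p <= s -> inn p = s - p.
Proof. by rewrite /inn; case: ifP => // h1 h2; lra. Qed.

Lemma star_split pst E p : pst \in P -> expensive P s d pst ->
  ((s <= pst /\ sucR P pst = Some E) \/ (pst <= s /\ sucL P pst = Some E)) ->
  p \in P -> cg p -> sd p = (s < E) -> outv p <= inn pst \/ `|s - E| <= inn p.
Proof.
move=> pstP ex gap pP c; have [ps nex [[sp e]|[sp e]]] := cg_spec c.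
- have ppst : p != pst by apply: contraNneq nex => ->.
  case: gap => [[spst eE]|[spst eE]]; rewrite /sd sp.
  + move=> _; have [_ pq m] := sucR_some e; have [_ pE mE] := sucR_some eE.
    have [_ n3] := nrm_lt (le_lt_trans spst pE).
    rewrite distrC n3 (inn_R spst) /outv /inn sp.
    case: (ltgtP p pst) => h.
    * by left; have := m _ pstP h; lra.
    * by right; have := mE _ pP h; lra.
    * by rewrite h eqxx in ppst.
  + have [_ Ep _] := sucL_some eE.
    have : ~~ (s < E) by rewrite -leNgt; apply: ltW; apply: lt_le_trans Ep spst.
    by move/negbTE ->.
- have ppst : p != pst by apply: contraNneq nex => ->.
  have ns : ~~ (s < p) by rewrite -leNgt ltW.
  case: gap => [[spst eE]|[spst eE]]; rewrite /sd (negbTE ns).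
  + have [_ pE _] := sucR_some eE.
    by rewrite (le_lt_trans spst pE).
  + move=> _; have [_ pq m] := sucL_some e; have [_ pE mE] := sucL_some eE.
    have [_ n3] := nrm_lt (lt_le_trans pE spst).
    rewrite n3 (inn_L spst) /outv /inn (negbTE ns).
    case: (ltgtP p pst) => h.
    * by right; have := mE _ pP h; lra.
    * by left; have := m _ pstP h; lra.
    * by rewrite h eqxx in ppst.
Qed.

Lemma star_cover pst E : feasible P s rho -> pst \in P ->
  ((s <= pst /\ sucR P pst = Some E) \/ (pst <= s /\ sucL P pst = Some E)) ->
  exists2 x, x \in P &
   (if (s < E) == (s < x) then inn x <= inn pst /\ `|s - E| <= inn x + rho x
    else `|s - E| <= rho x - inn x).
Proof.
move=> hf pP [[sp e]|[sp e]].
- have [x xP [h1 h2]] := cutR hf pP sp e; exists x => //.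
  have [_ pE _] := sucR_some e.
  have sE : s < E by apply: le_lt_trans sp pE.
  have [_ n3] := nrm_lt sE; rewrite distrC n3 sE (inn_R sp) /inn.
  case sx: (s < x) => /=; first by split; lra.
  by move/negbT/nlt: sx => sx; lra.
- have [x xP [h1 h2]] := cutL hf pP sp e; exists x => //.
  have [_ pE _] := sucL_some e.
  have sE : E < s by apply: lt_le_trans pE sp.
  have [_ n3] := nrm_lt sE; rewrite n3 (inn_L sp) /inn.
  have nE : (s < E) = false by apply/negbTE; rewrite -leNgt ltW.
  rewrite nE; case sx: (s < x) => /=; first by lra.
  by move/negbT/nlt: sx => sx; split; lra.
Qed.

Lemma sum_part (F : R -> R) (C : pred R) (f : R -> R) : uniq P ->
  (forall p, p \in P -> C p -> f p \in P) ->
  \sum_(p <- P | C p) F p = \sum_(x <- P) \sum_(p <- [seq p <- P | C p && (f p == x)]) F p.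
Proof.
move=> uP hf.
under [RHS]eq_bigr do rewrite big_filter big_mkcondr.
rewrite exchange_big /= [LHS]big_seq_cond [RHS]big_seq_cond; apply: eq_bigr => p /andP[pP Cp].
rewrite (bigD1_seq (f p)) ?hf //= eqxx big1 ?addr0 //.
by move=> x; rewrite eq_sym => /negbTE ->.
Qed.

Lemma star_exists : dmax P s d != 0 -> exists pst E,
  [/\ pst \in P, expensive P s d pst, E \in sucs P s pst & dmax P s d = `|s - E|].
Proof.
rewrite /dmax.
case: (bigmax_att P (expensive P s d) (fun p => \big[Num.max/0]_(q <- sucs P s p) dist s q))
  => [->|[p [pP ex e]]]; first by rewrite eqxx.
rewrite e => ne; exists p.
have : \big[Num.max/0]_(q <- sucs P s p) dist s q = 0 \/
   exists q, [/\ q \in sucs P s p & \big[Num.max/0]_(q <- sucs P s p) dist s q = dist s q].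
  elim: (sucs P s p) => [|y l IH]; first by left; rewrite big_nil.
  rewrite big_cons {1 3}/Order.max; case: ifP => _.
    case: IH => [->|[i [il ei]]]; [by left | right; exists i; split => //].
    by rewrite inE il orbT.
  by right; exists y; rewrite mem_head.
case => [h|[q [qi eq]]]; first by rewrite h eqxx in ne.
by exists q; split.
Qed.

End Main.
End Bridge.



Unset Implicit Arguments.

Theorem lemma12 (R : realType) (P : seq R) (s delta : R)
  (hP : uniq P) (hs : s \in P) (hd1 : 1 / 2 < delta) (hd2 : delta < 1)
  (rho_opt : R -> R) (hopt : optimal P s rho_opt) :
  cost2 P (rho_sb P s delta) <= c_delta delta * cost2 P rho_opt.
Proof.
have [hf _] := hopt.
have d0 : 0 < delta by lra.
have rge : forall x, x \in P -> 0 <= rho_opt x by case: hf.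
have cA : Ac delta <= c_delta delta by rewrite /c_delta /Ac le_max lexx.
have A1 : 1 + delta <= Ac delta.
  have := Ac_ge hd1 hd2; have : 0 <= delta * (1 - delta) ^+ 2 by apply: mulr_ge0; [lra|apply: sqr_ge0].
  lra.
rewrite cost_dec // (@sum_part R P (fun p => (outv P s p - inn s p) ^+ 2) (cg P s delta) (cov P s rho_opt) hP);
  last by move=> p pP c; have [] := cov_spec hf pP c.
set S := fun x => \sum_(p <- [seq p <- P | cg P s delta p && (cov P s rho_opt p == x)])
                     (outv P s p - inn s p) ^+ 2.
have mS : forall p x, p \in [seq p <- P | cg P s delta p && (cov P s rho_opt p == x)] ->
    [/\ p \in P, cg P s delta p & cov P s rho_opt p = x].
  by move=> p x; rewrite mem_filter => /andP[/andP[c /eqP e] pP].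
have Hg : forall x p, p \in [seq p <- P | cg P s delta p && (cov P s rho_opt p == x)] ->
    [/\ 0 <= inn s p, inn s p <= outv P s p & outv P s p - inn s p <= delta * outv P s p].
  by move=> x p /mS [_ c _]; have [] := cg_geo c.
have Hd : forall x p q, p \in [seq p <- P | cg P s delta p && (cov P s rho_opt p == x)] ->
    q \in [seq p <- P | cg P s delta p && (cov P s rho_opt p == x)] -> p != q -> sd s p = sd s q ->
    outv P s p <= inn s q \/ outv P s q <= inn s p.
  by move=> x p q /mS [pP cp _] /mS [qP cq _]; apply: (cg_disj cp cq pP qP).
have Hr : forall x p, p \in [seq p <- P | cg P s delta p && (cov P s rho_opt p == x)] ->
    if sd s p == (s < x) then inn s x <= inn s p /\ outv P s p <= inn s x + rho_opt x
    else outv P s p <= rho_opt x - inn s x.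
  move=> x p /mS [pP cp <-]; apply: cov_rel; first exact: cp.
  by have [] := cov_spec hf pP cp.
have Sx : forall x, x \in P -> S x <= (1 + delta) * rho_opt x ^+ 2.
  move=> x xP; apply: (gen_bound (d := delta) (r := rho_opt x) (a := inn s x) (sx := s < x) (sd := sd s) (inn := inn s) (out := outv P s)).
  - exact: filter_uniq.
  - exact: inn_ge0.
  - exact: rge.
  - exact: d0.
  - exact: hd2.
  - exact: Hg.
  - exact: Hd.
  - exact: Hr.
have Cx : forall x, x \in P -> S x <= c_delta delta * rho_opt x ^+ 2.
  move=> x xP; apply: le_trans (Sx x xP) _; apply: ler_wpM2r; first by apply: sqr_ge0.
  lra.
rewrite /cost2 mulr_sumr.
have eS : \sum_(x <- P) \sum_(p <- [seq p <- P | cg P s delta p && (cov P s rho_opt p == x)])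
   (outv P s p - inn s p) ^+ 2 = \sum_(x <- P) S x by [].
rewrite eS.
have [D0|Dn] := eqVneq (dmax P s delta) 0.
  rewrite D0 expr0n /= add0r; apply: ler_sum_seq => x xP; exact: Cx.
have [pst [E [pstP ex EP De]]] := star_exists Dn.
have [gap PD] := star_geo d0 hd2 pstP ex EP.
have [xs xsP HE] := star_cover hf pstP gap.
rewrite (bigD1_seq xs) //= [X in _ <= X](bigD1_seq xs) //=.
have St : `|s - E| ^+ 2 + S xs <= Ac delta * rho_opt xs ^+ 2.
  apply: (@star_bound R delta (rho_opt xs) (inn s xs) (s < xs) (sd s) (inn s) (outv P s) _
     _ _ _ _ _ _ _ _ (s < E) (inn s pst) `|s - E|).
  - exact: filter_uniq.
  - exact: inn_ge0.
  - exact: rge.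
  - exact: d0.
  - exact: hd2.
  - exact: Hg.
  - exact: Hd.
  - exact: Hr.
  - exact: hd1.
  - exact: inn_ge0.
  - exact: PD.
  - by move=> p /mS [pP cp _]; apply: (star_split pstP ex gap pP cp).
  - exact: HE.
have rest : \sum_(x <- P | x != xs) S x <= \sum_(x <- P | x != xs) c_delta delta * rho_opt x ^+ 2.
  rewrite big_seq_cond [X in _ <= X]big_seq_cond; apply: ler_sum => x /andP[xP _]; exact: Cx.
have : Ac delta * rho_opt xs ^+ 2 <= c_delta delta * rho_opt xs ^+ 2.
  by apply: ler_wpM2r => //; apply: sqr_ge0.
rewrite De; lra.
Qed.
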